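(* Let $1<a_1<a_2$ be coprime integers. The function $r_0:[1,\infty]\to[0,1]$ is strictly decreasing.
   Context: For $t\in[1,\infty)$ and $(u,v)\in\mathbb{R}^2$, $\|(u,v)\|_t=(|u|^t+|v|^t)^{1/t}$, and $\|(u,v)\|_\infty=\max(|u|,|v|)$. For $t\in[1,\infty]$ define $\mu_t(r)=\left\|\left(\frac{1-r}{a_1},\frac{r}{a_2}\right)\right\|_t$ for $r\in[0,1]$, and $r_0(t)=\min\{r\in[0,1]:\mu_t(r)=\frac{1}{a_2}\}$. The domain $[1,\infty]$ is ordered with $\infty$ as its largest element. *)

(* Defs.v *)
From HB Require Import structures.
From mathcomp Require Import all_boot all_order all_algebra.
From mathcomp Require Import all_classical all_reals all_analysis.
Set Implicit Arguments. Unset Strict Implicit. Unset Printing Implicit Defensive.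
Import Order.TTheory GRing.Theory Num.Theory.
Local Open Scope ring_scope.

(* ||(u,v)||_t for t in [1, +oo] (extended reals); -oo is never used. *)
Definition tnorm (R : realType) (t : \bar R) (u v : R) : R :=
  match t with
  | EFin s => (`|u| `^ s + `|v| `^ s) `^ s^-1
  | +oo%E => Num.max `|u| `|v|
  | -oo%E => 0
  end.

Definition mu (R : realType) (a1 a2 : nat) (t : \bar R) (r : R) : R :=
  tnorm t ((1 - r) / a1%:R) (r / a2%:R).

(* r_0(t) = min { r in [0,1] : mu_t(r) = 1/a2 }; the set is nonempty (r = 1)
   and closed, so its infimum is its minimum. *)
Definition r0 (R : realType) (a1 a2 : nat) (t : \bar R) : R :=
  inf [set r : R | 0 <= r <= 1 /\ mu a1 a2 t r = a2%:R^-1].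

(* Main.v *)
Require Import Defs.
From HB Require Import structures.
From mathcomp Require Import all_boot all_order all_algebra.
From mathcomp Require Import all_classical all_reals all_analysis.
From mathcomp Require Import ring lra.
Import Order.TTheory GRing.Theory Num.Theory.
Import numFieldNormedType.Exports.
Local Open Scope ring_scope.
Local Open Scope classical_set_scope.


Lemma cont_abspow (R : realType) (s : R) : 1 <= s -> continuous (fun x : R => `|x| `^ s).
Proof.
move=> s1 x.
have s0 : s != 0 by rewrite gt_eqF// (lt_le_trans ltr01 s1).
have [->|x0] := eqVneq x 0.
  apply/cvgrPdist_lt => e e0.
  have m0 : 0 < Num.min 1 e by rewrite lt_min ltr01 e0.
  near=> y.
  rewrite normr0 powR0// sub0r normrN ger0_norm ?powR_ge0//.
  have hy : `|y| < Num.min 1 e.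
    near: y. exists (Num.min 1 e) => //= z /=; by rewrite sub0r normrN.
  have [->|y0] := eqVneq y 0; first by rewrite normr0 powR0.
  apply: (le_lt_trans (ge1r_powR _ s1)); last by move: hy; rewrite lt_min => /andP[].
  by rewrite normr_gt0 y0 /= ltW//; move: hy; rewrite lt_min => /andP[].
apply: (@continuous_comp _ _ _ (fun x : R => `|x|) (fun a => a `^ s)).
  exact: norm_continuous.
apply/differentiable_continuous/derivable1_diffP.
by apply: derivable_powR; rewrite in_itv/= andbT normr_gt0.
Unshelve. all: by end_near. Qed.


Set Implicit Arguments. Unset Strict Implicit.
Lemma powR_ltE (R : realType) (s x y : R) : 0 < s -> 0 <= x -> 0 <= y ->
  (x `^ s < y `^ s) = (x < y).
Proof.
move=> s0 x0 y0; apply/idP/idP; last by apply: gt0_ltr_powR; rewrite ?nnegrE.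
apply: contraTT; rewrite -!leNgt => yx.
by apply: ge0_ler_powR; rewrite ?nnegrE// ltW.
Qed.

Lemma powR_invK (R : realType) (s x : R) : 0 < s -> 0 <= x -> (x `^ s^-1) `^ s = x.
Proof. by move=> s0 x0; rewrite -powRrM mulVf ?gt_eqF// powRr1. Qed.

Lemma root_ltE (R : realType) (s X c : R) : 0 < s -> 0 <= X -> 0 <= c ->
  (X `^ s^-1 < c) = (X < c `^ s).
Proof.
move=> s0 X0 c0; rewrite -[X in _ = (X < _)](powR_invK s0 X0) powR_ltE ?powR_ge0//.
Qed.

Lemma root_eqE (R : realType) (s X c : R) : 0 < s -> 0 <= X -> 0 <= c ->
  (X `^ s^-1 = c) <-> (X = c `^ s).
Proof.
move=> s0 X0 c0; split => [<-|->]; first by rewrite powR_invK.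
by rewrite -powRrM mulrV ?unitfE ?gt_eqF// powRr1.
Qed.

Unset Implicit Arguments.
Section S.
Variables (R : realType) (a1 a2 : nat).
Hypothesis h1 : (1 < a1)%N.
Hypothesis h12 : (a1 < a2)%N.

Local Notation A1 := (a1%:R : R).
Local Notation A2 := (a2%:R : R).
Lemma A1gt0 : 0 < A1. Proof. by rewrite ltr0n (ltn_trans _ h1). Qed.
Lemma A2gt0 : 0 < A2. Proof. by rewrite ltr0n (ltn_trans _ (ltn_trans h1 h12)). Qed.
Lemma A12 : A1 < A2. Proof. by rewrite ltr_nat. Qed.

Lemma cont_u : continuous (fun r : R => (1 - r) / A1).
Proof.
move=> r; apply: cvgM; last exact: cvg_cst.
by apply: cvgB; [exact: cvg_cst | exact: cvg_id].
Qed.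

Lemma cont_v : continuous (fun r : R => r / A2).
Proof.
move=> r; apply: cvgM; last exact: cvg_cst.
exact: cvg_id.
Qed.

Lemma mu_cont (t : \bar R) : (1 <= t)%E -> continuous (mu a1 a2 t).
Proof.
case: t => [s||] //; rewrite ?lee_fin => s1 r; rewrite /mu /tnorm.
- apply: (@continuous_comp _ _ _ (fun r : R => `|(1 - r) / A1| `^ s + `|r / A2| `^ s) (fun a : R => a `^ s^-1) r).
    have c1 := (@continuous_comp _ _ _ (fun r : R => (1 - r) / A1) (fun x : R => `|x| `^ s) r (cont_u r) (@cont_abspow R s s1 _)).
    have c2 := (@continuous_comp _ _ _ (fun r : R => r / A2) (fun x : R => `|x| `^ s) r (cont_v r) (@cont_abspow R s s1 _)).
    exact: (cvgD c1 c2).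
  apply/differentiable_continuous/derivable1_diffP.
  apply: derivable_powR; rewrite in_itv/= andbT.
  have [->|r1] := eqVneq r 1.
    rewrite subrr mul0r normr0 powR0 ?add0r; last by rewrite gt_eqF// (lt_le_trans ltr01 s1).
    by apply: powR_gt0; rewrite normr_gt0 mul1r invr_eq0 gt_eqF// A2gt0.
  rewrite -[X in X < _](addr0 0) ltr_leD ?powR_ge0 //.
  apply: powR_gt0; rewrite normr_gt0 mulf_neq0// ?invr_eq0 ?subr_eq0 1?eq_sym// lt_eqF ?A1gt0//.
- have c1 := (@continuous_comp _ _ _ (fun r : R => (1 - r) / A1) (@Num.norm _ R) r (cont_u r) (@norm_continuous _ _ _)).
  have c2 := (@continuous_comp _ _ _ (fun r : R => r / A2) (@Num.norm _ R) r (cont_v r) (@norm_continuous _ _ _)).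
  under [X in continuous_at _ X]eq_fun => ? do rewrite maxr_absE.
  apply: cvgM; [|exact: cvg_cst]; apply: cvgD; first exact: cvgD.
  by apply: cvg_norm; apply: cvgB.
Qed.

Lemma c_gt0 : 0 < A2^-1. Proof. by rewrite invr_gt0 A2gt0. Qed.
Lemma c_lt : A2^-1 < A1^-1.
Proof. by rewrite ltf_pV2 ?posrE ?A1gt0 ?A2gt0// A12. Qed.

Lemma mu1 (t : \bar R) : (1 <= t)%E -> mu a1 a2 t 1 = A2^-1.
Proof.
case: t => [s||] //; rewrite ?lee_fin => s1; rewrite /mu /tnorm subrr mul0r normr0 mul1r.
  have s0 : 0 < s by exact: (lt_le_trans ltr01 s1).
  rewrite powR0 ?gt_eqF// add0r ger0_norm ?invr_ge0 ?ltW ?A2gt0//.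
  by rewrite -powRrM mulfV ?gt_eqF// powRr1// invr_ge0 ltW// A2gt0.
by rewrite max_r ger0_norm// invr_ge0 ltW// A2gt0.
Qed.

Lemma mu0 (t : \bar R) : (1 <= t)%E -> mu a1 a2 t 0 = A1^-1.
Proof.
case: t => [s||] //; rewrite ?lee_fin => s1; rewrite /mu /tnorm subr0 mul0r normr0 mul1r.
  have s0 : 0 < s by exact: (lt_le_trans ltr01 s1).
  rewrite powR0 ?gt_eqF// addr0 ger0_norm ?invr_ge0 ?ltW ?A1gt0//.
  by rewrite -powRrM mulfV ?gt_eqF// powRr1// invr_ge0 ltW// A1gt0.
by rewrite max_l ger0_norm// invr_ge0 ltW// A1gt0.
Qed.

Definition SS (t : \bar R) := [set r : R | 0 <= r <= 1 /\ mu a1 a2 t r = a2%:R^-1].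

Lemma SS_lb t : lbound (SS t) 0.
Proof. by move=> r [/andP[]]. Qed.

Lemma r0_le t r : SS t r -> r0 a1 a2 t <= r.
Proof. by move=> Sr; apply: ge_inf => //; exists 0; exact: SS_lb. Qed.

Lemma r0_mem (t : \bar R) : (1 <= t)%E -> SS t (r0 a1 a2 t).
Proof.
move=> t1.
have S1 : SS t 1 by split; [rewrite ler01 lexx | exact: mu1].
have cl : closed (SS t).
  have -> : SS t = `[0, 1]%classic `&` (mu a1 a2 t) @^-1` [set a2%:R^-1].
    by apply/seteqP; split => r /=; rewrite in_itv/=.
  apply: closedI; first exact: itv_closed.
  apply: preimage_closed; last exact: closed_eq.
  by move=> x _; exact: mu_cont.
apply: (itv_closed_infimums _ cl); first by exists 1.
split; first by apply: ge_inf; exists 0; exact: SS_lb.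
by move=> y ly; apply: lb_le_inf => //; exists 1.
Qed.


Lemma mu_fin_lt (s r : R) : 1 <= s ->
  (mu a1 a2 (EFin s) r < A2^-1) =
  (`|(1 - r) / A1| `^ s + `|r / A2| `^ s < A2^-1 `^ s).
Proof.
move=> s1; have s0 : 0 < s by exact: (lt_le_trans ltr01 s1).
rewrite /mu /tnorm root_ltE// ?addr_ge0 ?powR_ge0// ltW// c_gt0.
Qed.

Lemma mu_fin_eq (s r : R) : 1 <= s ->
  (mu a1 a2 (EFin s) r = A2^-1) <->
  (`|(1 - r) / A1| `^ s + `|r / A2| `^ s = A2^-1 `^ s).
Proof.
move=> s1; have s0 : 0 < s by exact: (lt_le_trans ltr01 s1).
rewrite /mu /tnorm root_eqE// ?addr_ge0 ?powR_ge0// ltW// c_gt0.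
Qed.

Lemma powR_split (x s t : R) : 0 < x -> x `^ t = x `^ s * x `^ (t - s).
Proof.
move=> x0; rewrite -powRD; first by rewrite addrC subrK.
by apply/implyP => _; rewrite gt_eqF.
Qed.

Lemma key_fin (s t p : R) : 1 <= s -> s < t -> 0 < p < 1 ->
  mu a1 a2 (EFin s) p = A2^-1 -> mu a1 a2 (EFin t) p < A2^-1.
Proof.
move=> s1 st /andP[p0 p1].
have s0 : 0 < s by exact: (lt_le_trans ltr01 s1).
have t1 : 1 <= t by exact: (le_trans s1 (ltW st)).
rewrite mu_fin_lt // => /(@mu_fin_eq s p s1) E.
set U := `|(1 - p) / A1| in E *; set V := `|p / A2| in E *; set c := A2^-1 in E *.
have U0 : 0 < U by rewrite normr_gt0 mulf_neq0 ?invr_eq0 ?subr_eq0 ?gt_eqF ?A1gt0.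
have V0 : 0 < V by rewrite normr_gt0 mulf_neq0 ?invr_eq0 ?gt_eqF ?A2gt0.
have c0 : 0 < c by exact: c_gt0.
have Uc : U < c.
  rewrite -(@powR_ltE _ s) ?ltW// -E ltrDl; exact: powR_gt0.
have Vc : V < c.
  rewrite -(@powR_ltE _ s) ?ltW// -E ltrDr; exact: powR_gt0.
have d : 0 < t - s by rewrite subr_gt0.
rewrite (powR_split U s t U0) (powR_split V s t V0) (powR_split c s t c0) -E mulrDl.
apply: ltrD; rewrite ltr_pM2l ?powR_gt0//; apply: gt0_ltr_powR; rewrite ?nnegrE ?ltW//.
Qed.


Lemma key_inf (s p : R) : 1 <= s -> 0 < p < 1 ->
  mu a1 a2 (EFin s) p = A2^-1 -> mu a1 a2 +oo%E p < A2^-1.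
Proof.
move=> s1 /andP[p0 p1].
have s0 : 0 < s by exact: (lt_le_trans ltr01 s1).
move=> /(@mu_fin_eq s p s1) E.
rewrite /mu /tnorm.
set U := `|(1 - p) / A1| in E *; set V := `|p / A2| in E *; set c := A2^-1 in E *.
have U0 : 0 < U by rewrite normr_gt0 mulf_neq0 ?invr_eq0 ?subr_eq0 ?gt_eqF ?A1gt0.
have V0 : 0 < V by rewrite normr_gt0 mulf_neq0 ?invr_eq0 ?gt_eqF ?A2gt0.
have c0 : 0 < c by exact: c_gt0.
have Uc : U < c.
  rewrite -(@powR_ltE _ s) ?ltW// -E ltrDl; exact: powR_gt0.
have Vc : V < c.
  rewrite -(@powR_ltE _ s) ?ltW// -E ltrDr; exact: powR_gt0.
by rewrite gt_max Uc Vc.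
Qed.

Lemma wit_inf : exists q, 0 <= q < 1 /\ mu a1 a2 +oo%E q < A2^-1.
Proof.
have c0 := c_gt0; have a0 := A1gt0; have a20 := A2gt0.
have e1 : A1 * A2^-1 < 1 by rewrite mulrC -ltr_pdivlMl ?invr_gt0// invrK mulr1 A12.
have e0 : 0 < A1 * A2^-1 by rewrite mulr_gt0.
exists (1 - A1 * A2^-1 / 2); split.
  apply/andP; split; lra.
rewrite /mu /tnorm gt_max; apply/andP; split.
  have -> : (1 - (1 - A1 * A2^-1 / 2)) / A1 = A2^-1 / 2.
    by field; rewrite !gt_eqF.
  rewrite ger0_norm; [lra | rewrite divr_ge0// ltW//].
rewrite ger0_norm; last by rewrite divr_ge0 ?ltW//; lra.
rewrite -[X in _ < X]mul1r ltr_pM2r ?invr_gt0//; lra.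
Qed.


Lemma wit_fin (t : R) : 1 < t -> exists q, 0 <= q < 1 /\ mu a1 a2 (EFin t) q < A2^-1.
Proof.
move=> t1.
have c0 := c_gt0; have a0 := A1gt0; have a20 := A2gt0.
set c := A2^-1 in c0 *.
have t0 : 0 < t by lra.
have tm : 0 < t - 1 by lra.
have C0 : 0 < c `^ t by exact: powR_gt0.
set d0 := (A1 * c `^ t / 2) `^ (t - 1)^-1.
have d00 : 0 < d0 by apply: powR_gt0; rewrite divr_gt0// mulr_gt0.
set d := Num.min d0 (A1^-1 / 2).
have d_pos : 0 < d by rewrite lt_min d00 divr_gt0 ?invr_gt0.
have dd0 : d <= d0 by rewrite ge_min lexx.
have dA : d <= A1^-1 / 2 by rewrite ge_min lexx orbT.
set e := A1 * d.
have e0 : 0 < e by rewrite mulr_gt0.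
have e2 : e <= 1 / 2.
  rewrite /e -(@ler_pM2l _ A1^-1) ?invr_gt0// mulrA mulVf ?gt_eqF// mul1r.
  by rewrite mul1r.
exists (1 - e); split; first by apply/andP; split; lra.
rewrite mu_fin_lt; last exact: ltW.
have -> : `|(1 - (1 - e)) / A1| = d.
  rewrite /e (_ : 1 - (1 - A1 * d) = A1 * d); last by ring.
  by rewrite mulrC mulrA mulVf ?gt_eqF// mul1r ger0_norm// ltW.
have -> : `|(1 - e) / A2| = (1 - e) * c.
  by rewrite ger0_norm// divr_ge0 ?ltW//; lra.
have h1' : d `^ t <= e * c `^ t / 2.
  rewrite -(@mulr_powRB1 _ d t (ltW d_pos) t0).
  have : d `^ (t - 1) <= A1 * c `^ t / 2.
    have hX : 0 <= A1 * c `^ t / 2 by rewrite divr_ge0// mulr_ge0// ltW.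
    rewrite -(@powR_invK _ (t - 1) (A1 * c `^ t / 2) tm hX).
    by apply: ge0_ler_powR; rewrite ?nnegrE ?powR_ge0// ltW.
  move=> h; have -> : e * c `^ t / 2 = d * (A1 * c `^ t / 2) by rewrite /e; ring.
  by rewrite ler_pM2l.
have h2' : ((1 - e) * c) `^ t <= (1 - e) * c `^ t.
  have he : 0 <= 1 - e by lra.
  rewrite (powRM _ he (ltW c0)) ler_pM2r//; apply: ge1r_powR; last exact: ltW.
  by apply/andP; split; lra.
have : e * c `^ t / 2 + (1 - e) * c `^ t < c `^ t.
  have : 0 < e * c `^ t by rewrite mulr_gt0.
  rewrite mulrBl mul1r; move: (e * c `^ t) => ec; lra.
move=> h; apply: le_lt_trans h; exact: lerD.
Qed.


Lemma main_sec (s t : \bar R) : (1 <= s)%E -> (1 <= t)%E -> (s < t)%E ->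
    r0 a1 a2 t < r0 a1 a2 s.
Proof.
move=> s1 t1 st.
case: s s1 st => [s'||] //; last by case: t t1.
move=> s1E st.
have s1 : 1 <= s' by rewrite -lee_fin.
set p := r0 a1 a2 s'%:E.
have [/andP[p0 p1] mup] := @r0_mem s'%:E s1E.
have c0 := c_gt0; have cl := c_lt.
have [q [/andP[q0 qp] muq]] : exists q, 0 <= q <= p /\ mu a1 a2 t q < A2^-1.
  move: p1; rewrite le_eqVlt => /orP[/eqP pe1|pl1].
    case: t t1 st => [t'||] // t1 st.
      have [q [/andP[q0 q1] muq]] := @wit_fin t' (le_lt_trans s1 (st : s' < t')).
      by exists q; split => //; rewrite q0 /p pe1 ltW.
    have [q [/andP[q0 q1] muq]] := wit_inf.
    by exists q; split => //; rewrite q0 /p pe1 ltW.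
  have pp : 0 < p.
    rewrite lt_neqAle p0 andbT; apply/negP => /eqP p0E.
    move: mup; rewrite -/p -p0E (@mu0 s'%:E s1E) => /eqP; rewrite gt_eqF//.
  exists p; split; first by rewrite p0 lexx.
  case: t t1 st => [t'||] // t1 st.
    by apply: (@key_fin s' t' p s1) => //; rewrite pp pl1.
  by apply: (@key_inf s' p s1) => //; rewrite pp pl1.
have H : Num.min (mu a1 a2 t 0) (mu a1 a2 t q) <= A2^-1 <= Num.max (mu a1 a2 t 0) (mu a1 a2 t q).
  rewrite (@mu0 t t1) ge_min le_max; apply/andP; split; apply/orP; [right; exact: ltW | left; exact: ltW].
have [r' r'in mur'] := IVT q0 (continuous_subspaceT (@mu_cont t t1)) H.
move: r'in; rewrite in_itv/= => /andP[r'0 r'q].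
have r'lt : r' < q.
  rewrite lt_neqAle r'q andbT; apply/negP => /eqP E.
  by move: muq; rewrite -E mur' ltxx.
have Sr : SS t r'.
  split => //; rewrite r'0 /=.
  by apply: (le_trans r'q); apply: (le_trans qp).
apply: (le_lt_trans (@r0_le t r' Sr)); exact: (lt_le_trans r'lt qp).
Qed.

End S.

Theorem lemma4 (R : realType) (a1 a2 : nat) :
  (1 < a1)%N -> (a1 < a2)%N -> coprime a1 a2 ->
  forall s t : \bar R, (1 <= s)%E -> (1 <= t)%E -> (s < t)%E ->
    r0 a1 a2 t < r0 a1 a2 s.
Proof.
move=> h1 h12 _ s t s1 t1 st.
exact: (@main_sec R a1 a2 h1 h12 s t s1 t1 st).
Qed.
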